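(* Let $n\ge7$ and $\mathcal{A}\in\hat{\mathcal{T}}_n$. Then the automorphisms of $\mathcal{A}$ are exactly the linear maps $\varphi$ with $\varphi(e_1)=e_1+\alpha e_n$, $\varphi(e_2)=e_2+\beta e_n$, $\varphi(e_i)=e_i$ for $3\le i\le n$, where $\alpha,\beta\in\mathbb{C}$.
   Context: Over $\mathbb{C}$, basis $e_1,\dots,e_n$, $e_ie_j=\sum_kc_{ij}^ke_k$. For $n\ge3$, $\mathcal{T}'_n$ is the family of anticommutative algebra structures with $c_{ij}^k=0$ whenever $k\le\max\{i,j\}$ and $e_ie_{i+1}=e_{i+2}$ for $1\le i\le n-2$, other constants arbitrary subject to anticommutativity. For $n\ge7$, $\hat{\mathcal{T}}_n$ is the subfamily of $\mathcal{T}'_n$ with $c_{13}^4=c_{14}^5=c_{15}^6=c_{24}^5=c_{25}^6=c_{14}^6=c_{24}^6=c_{13}^6=0$, $c_{35}^6=1$ and $c_{13}^5c_{46}^7\ne0$. *)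

(* Defs.v *)
From HB Require Import structures.
From mathcomp Require Import all_boot all_order all_algebra.
From mathcomp Require Import complex reals.
Set Implicit Arguments. Unset Strict Implicit. Unset Printing Implicit Defensive.
Import Order.TTheory GRing.Theory Num.Theory.
Local Open Scope ring_scope.

(* Structure constants are 1-based: c i j k = c_{ij}^k for 1 <= i,j,k <= n;
   values outside that range are irrelevant. *)
Section Alg.
Variable F : fieldType.

(* vectors of F^n are row vectors 'rV_n; e_i (1-based) is the row delta_mx 0 (i-1) *)
Definition basis_vec (n i : nat) : 'rV[F]_n :=
  \row_(k < n) (if k.+1 == i then 1 else 0).

Definition alg_mul (n : nat) (c : nat -> nat -> nat -> F) (x y : 'rV[F]_n)
  : 'rV[F]_n :=
  \row_(k < n) \sum_(i < n) \sum_(j < n) x 0 i * y 0 j * c i.+1 j.+1 k.+1.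

(* automorphism: bijective linear map phi (u |-> u *m A) preserving product *)
Definition is_automorphism (n : nat) (c : nat -> nat -> nat -> F)
  (A : 'M[F]_n) : Prop :=
  A \in unitmx /\
  forall x y : 'rV[F]_n, alg_mul c (x *m A) (y *m A) = alg_mul c x y *m A.

Definition in_Tprime (n : nat) (c : nat -> nat -> nat -> F) : Prop :=
  [/\ (forall i j k, (1 <= i <= n)%N -> (1 <= j <= n)%N -> (1 <= k <= n)%N ->
         c i j k = - c j i k),
      (forall i j k, (1 <= i <= n)%N -> (1 <= j <= n)%N -> (1 <= k <= n)%N ->
         (k <= maxn i j)%N -> c i j k = 0)
    & (forall i k, (1 <= i <= n - 2)%N -> (1 <= k <= n)%N ->
         c i i.+1 k = if k == i.+2 then 1 else 0)].

Definition in_That (n : nat) (c : nat -> nat -> nat -> F) : Prop :=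
  [/\ in_Tprime n c,
      c 1%N 3%N 4%N = 0 /\ c 1%N 4%N 5%N = 0 /\ c 1%N 5%N 6%N = 0 /\
      c 2%N 4%N 5%N = 0 /\ c 2%N 5%N 6%N = 0 /\ c 1%N 4%N 6%N = 0 /\
      c 2%N 4%N 6%N = 0 /\ c 1%N 3%N 6%N = 0,
      c 3%N 5%N 6%N = 1
    & c 1%N 3%N 5%N * c 4%N 6%N 7%N != 0].

(* the matrix of phi: phi(e_1) = e_1 + a e_n, phi(e_2) = e_2 + b e_n,
   phi(e_i) = e_i otherwise; row i of the matrix is phi(e_{i+1}) *)
Definition special_aut (n : nat) (a b : F) : 'M[F]_n :=
  \matrix_(i < n, j < n)
    ((if i == j :> nat then 1 else 0) +
     (if j.+1 == n then (if i == 0 :> nat then a else if i == 1 :> nat then b else 0)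
      else 0)).
End Alg.

(* Main.v *)
Require Import Defs.
From HB Require Import structures.
From mathcomp Require Import all_boot all_order all_algebra.
From mathcomp Require Import complex reals.
From mathcomp Require Import zify ring.
Set Implicit Arguments. Unset Strict Implicit. Unset Printing Implicit Defensive.
Import Order.TTheory GRing.Theory Num.Theory.
Local Open Scope ring_scope.

Section General.
Variable K : numFieldType.

Lemma sum_delta (p k : nat) (G : nat -> K) :
  \sum_(i < p) (if (i : nat) == k then G i else 0) = if (k < p)%N then G k else 0.
Proof.
case: ltnP => h.
  rewrite (bigD1 (Ordinal h)) //= eqxx big1 ?addr0 // => i ne.
  case: eqP => // e; move: ne; by rewrite -val_eqE /= e eqxx.
apply: big1 => i _; case: eqP => // e.
by have := ltn_ord i; rewrite e ltnNge h.
Qed.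

Lemma eq_neg0 (x : K) : x = - x -> x = 0.
Proof.
move=> h; have : x *+ 2 = 0 by rewrite mulr2n {1}h addNr.
by move/eqP; rewrite mulrn_eq0 /= => /eqP.
Qed.

Variable n : nat.
Variable c : nat -> nat -> nat -> K.

Definition co (x : 'rV[K]_n) (k : nat) : K :=
  \sum_(j < n) (if (j.+1 == k)%N then x 0 j else 0).
Definition M (f g : nat -> K) (p : nat) : K :=
  \sum_(s < p) \sum_(t < p) f s * g t * c s t p.
Definition E (i : nat) : nat -> K := fun p => if (p == i)%N then 1 else 0.
Definition supp (f : nat -> K) (m : nat) := forall s, (s < m)%N -> f s = 0.

Lemma co_ord x (j : 'I_n) : co x j.+1 = x 0 j.
Proof.
rewrite /co (bigD1 j) //= eqxx big1 ?addr0 // => k ne.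
rewrite eqSS; case: eqP => // e; move: ne; by rewrite -val_eqE /= e eqxx.
Qed.

Lemma co0 x : co x 0 = 0.
Proof. by apply: big1 => j _. Qed.

Lemma co_gt x k : (n < k)%N -> co x k = 0.
Proof.
move=> h; apply: big1 => j _.
case: eqP => // e.
have := ltn_ord j. rewrite -ltnS e. lia.
Qed.

Lemma co_eq x y : (forall k, (1 <= k <= n)%N -> co x k = co y k) -> x = y.
Proof.
move=> h; apply/rowP => j; rewrite -!co_ord; apply: h.
by rewrite /= ltn_ord.
Qed.

Lemma co_basis i p : (1 <= i <= n)%N -> co (basis_vec K n i) p = E i p.
Proof.
move=> /andP [h1 h2]; rewrite /co /E.
under eq_bigr do rewrite mxE.
have -> : \sum_(j < n) (if (j.+1 == p)%N then (if (j.+1 == i)%N then 1 else 0) else 0)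
   = \sum_(j < n) (if (j : nat) == p.-1 then (if p == i then (1:K) else 0) else 0).
  apply: eq_bigr => j _; case: p => [|p] /=; first by case: (i) h1 => // i' _; rewrite if_same.
  rewrite eqSS; case: eqP => // ->; by [].
rewrite (sum_delta n p.-1 (fun _ => if p == i then (1:K) else 0)).
case: p => [|p] /=; first by case: (i) h1 => // i' _; rewrite if_same.
case: ltnP => // h; case: eqP => // e; move: h2; rewrite -e; lia.
Qed.

Lemma M_ext f g f' g' p :
  (forall s, (s < p)%N -> f s = f' s) -> (forall t, (t < p)%N -> g t = g' t) ->
  M f g p = M f' g' p.
Proof.
move=> hf hg; apply: eq_bigr => s _; apply: eq_bigr => t _.
by rewrite hf // hg.
Qed.

Lemma M_supp f g i j p : supp f i -> supp g j -> (p <= maxn i j)%N -> M f g p = 0.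
Proof.
move=> hf hg hp; apply: big1 => s _; apply: big1 => t _.
case: (ltnP s i) => hs; first by rewrite hf // !mul0r.
case: (ltnP t j) => ht; first by rewrite hg // mulr0 mul0r.
have := ltn_ord s; have := ltn_ord t; lia.
Qed.

Lemma M_EE i j p : M (E i) (E j) p = if (i < p)%N && (j < p)%N then c i j p else 0.
Proof.
rewrite /M.
have -> : \sum_(s < p) \sum_(t < p) E i s * E j t * c s t p =
  \sum_(s < p) (if (s : nat) == i then (if (j < p)%N then c i j p else 0) else 0).
  apply: eq_bigr => s _.
  have -> : \sum_(t < p) E i s * E j t * c s t p =
     \sum_(t < p) (if (t : nat) == j then E i s * c s j p else 0).
    apply: eq_bigr => t _; rewrite [E j t]/E; case: eqP => [->|]; first by rewrite mulr1.
    by rewrite mulr0 mul0r.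
  move: (sum_delta p j (fun _ => E i s * c s j p)) => /= ->; rewrite /E; case: eqP => [->|]; first by rewrite mul1r.
  by rewrite !mul0r if_same.
by move: (sum_delta p i (fun _ => if (j < p)%N then c i j p else 0)) => /= ->; case: (i < p)%N.
Qed.

Lemma M_split f g f0 g0 f' g' p :
  (forall s, f s = f0 s + f' s) -> (forall t, g t = g0 t + g' t) ->
  M f g p = M f0 g0 p + M f0 g' p + M f' g0 p + M f' g' p.
Proof.
move=> hf hg; rewrite /M -!big_split; apply: eq_bigr => s _.
rewrite -!big_split; apply: eq_bigr => t _; rewrite hf hg /=; ring.
Qed.


Lemma trunc (F : nat -> K) q m : (q <= m)%N -> (forall i, (q <= i)%N -> (i < m)%N -> F i = 0) ->
  \sum_(i < m) F i = \sum_(i < q) F i.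
Proof.
move=> hqm h; rewrite -!(big_mkord xpredT) (@big_cat_nat _ _ _ q 0 m _ _ (leq0n q) hqm) /=.
rewrite [X in _ + X]big_nat_cond [X in _ + X]big1 ?addr0 // => i /andP[/andP[h1 h2] _].
exact: h.
Qed.

Lemma sum_shift (G : nat -> K) q : G 0%N = 0 -> \sum_(i < q.+1) G i = \sum_(i < q) G i.+1.
Proof. by move=> h; rewrite big_ord_recl h add0r. Qed.

Hypothesis cA : forall i j k, (1 <= i <= n)%N -> (1 <= j <= n)%N -> (1 <= k <= n)%N ->
         c i j k = - c j i k.
Hypothesis cM : forall i j k, (1 <= i <= n)%N -> (1 <= j <= n)%N -> (1 <= k <= n)%N ->
         (k <= maxn i j)%N -> c i j k = 0.
Hypothesis cC : forall i k, (1 <= i <= n - 2)%N -> (1 <= k <= n)%N ->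
         c i i.+1 k = if k == i.+2 then 1 else 0.

Lemma cD i k : (1 <= i <= n)%N -> (1 <= k <= n)%N -> c i i k = 0.
Proof. by move=> hi hk; apply: eq_neg0; apply: cA. Qed.

Lemma mulE x y p : (1 <= p <= n)%N -> co (alg_mul c x y) p = M (co x) (co y) p.
Proof.
case: p => [|q] //= hq.
have hq' : (q < n)%N by lia.
have hqn : (q <= n)%N by lia.
rewrite (co_ord _ (Ordinal hq')) mxE.
under eq_bigr => i _ do under eq_bigr => j _ do rewrite -(co_ord x i) -(co_ord y j).
rewrite /M.
rewrite (@sum_shift (fun s => \sum_(t < q.+1) co x s * co y t * c s t q.+1)); last first.
  by apply: big1 => t _; rewrite co0 !mul0r.
under [RHS]eq_bigr => i _ do rewrite (@sum_shift (fun t => co x i.+1 * co y t * c i.+1 t q.+1)) ?co0 ?mulr0 ?mul0r //.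
rewrite (@trunc (fun i => \sum_(j < n) co x i.+1 * co y j.+1 * c i.+1 j.+1 q.+1) q n) //; last first.
  move=> i h1 h2; apply: big1 => j _; rewrite cM ?mulr0 //; have := ltn_ord j; lia.
apply: eq_bigr => i _.
rewrite (@trunc (fun j => co x i.+1 * co y j.+1 * c i.+1 j.+1 q.+1) q n) //; last first.
  move=> j h1 h2; rewrite cM ?mulr0 //; have := ltn_ord i; lia.
Qed.


Lemma Lead1 f g j : (1 <= j)%N -> (j.+1 <= n)%N -> supp g j ->
  M f g j.+1 = \sum_(s < j) f s * g j * c s j j.+1.
Proof.
move=> h1 h2 hg.
have inner s : \sum_(t < j.+1) f s * g t * c s t j.+1 = f s * g j * c s j j.+1.
  rewrite big_ord_recr /= big1 ?add0r // => t _; by rewrite hg ?mulr0 ?mul0r.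
rewrite /M; under eq_bigr do rewrite inner.
rewrite big_ord_recr /= cD ?mulr0 ?addr0 //; lia.
Qed.

Lemma ME_consec i p : (1 <= i)%N -> (i.+2 <= n)%N -> (1 <= p <= n)%N ->
  M (E i) (E i.+1) p = E i.+2 p.
Proof.
move=> h1 h2 hp; rewrite M_EE /E; case: ifP => h.
  rewrite cC //; lia.
case: eqP => // e; move: h; rewrite e; lia.
Qed.

Lemma mul_consec i : (1 <= i)%N -> (i.+2 <= n)%N ->
  alg_mul c (basis_vec K n i) (basis_vec K n i.+1) = basis_vec K n i.+2.
Proof.
move=> h1 h2; apply: co_eq => p hp; rewrite mulE // co_basis; last lia.
rewrite -ME_consec //; apply: M_ext => s _; rewrite co_basis //; lia.
Qed.

Lemma M_small f g p : f 0%N = 0 -> g 0%N = 0 -> (p <= 2)%N -> (2 <= n)%N -> M f g p = 0.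
Proof.
move=> f0 g0 hp hn; case: p hp => [|[|[|p]]] // _; rewrite /M.
- by rewrite big_ord0.
- by rewrite !big_ord_recr !big_ord0 /= f0 !mul0r !add0r.
- rewrite !big_ord_recr !big_ord0 /= f0 g0 (@cD 1 2); [by rewrite ?(mul0r, mulr0, add0r) | lia | lia].
Qed.

End General.

Section Aut.
Variable K : numFieldType.
Variable n : nat.
Variable c : nat -> nat -> nat -> K.
Hypothesis cA : forall i j k, (1 <= i <= n)%N -> (1 <= j <= n)%N -> (1 <= k <= n)%N ->
         c i j k = - c j i k.
Hypothesis cM : forall i j k, (1 <= i <= n)%N -> (1 <= j <= n)%N -> (1 <= k <= n)%N ->
         (k <= maxn i j)%N -> c i j k = 0.
Hypothesis cC : forall i k, (1 <= i <= n - 2)%N -> (1 <= k <= n)%N ->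
         c i i.+1 k = if k == i.+2 then 1 else 0.
Variable A : 'M[K]_n.
Hypothesis Haut : forall x y : 'rV[K]_n,
  alg_mul c (x *m A) (y *m A) = alg_mul c x y *m A.

Definition U k := co (basis_vec K n k *m A).

Lemma U0 k : U k 0 = 0.
Proof. exact: co0. Qed.

Lemma Ugt k p : (n < p)%N -> U k p = 0.
Proof. exact: co_gt. Qed.

Lemma U_row (i : 'I_n) : basis_vec K n i.+1 *m A = row i A.
Proof.
rewrite rowE; congr (_ *m A); apply/rowP => j; rewrite !mxE eqSS /=.
by rewrite -val_eqE /=; case: (j == i :> nat).
Qed.

Lemma co_mulmx v p : (1 <= p <= n)%N ->
  co (v *m A) p = \sum_(q < n) co v q.+1 * U q.+1 p.
Proof.
case: p => [|r] //= hr; have hr' : (r < n)%N by lia.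
rewrite (co_ord _ (Ordinal hr')) mxE; apply: eq_bigr => q _.
by rewrite co_ord /U U_row (co_ord _ (Ordinal hr')) !mxE.
Qed.

Lemma autE i j p : (1 <= i <= n)%N -> (1 <= j <= n)%N -> (1 <= p <= n)%N ->
  M c (U i) (U j) p =
  \sum_(q < n) (if (i < q.+1)%N && (j < q.+1)%N then c i j q.+1 else 0) * U q.+1 p.
Proof.
move=> hi hj hp; rewrite /U -mulE // Haut co_mulmx //; apply: eq_bigr => q _.
rewrite mulE //; last by have := ltn_ord q; lia.
rewrite (@M_ext _ _ _ _ (E K i) (E K j)) ?M_EE // => s _; exact: co_basis.
Qed.

Lemma U_rec k p : (1 <= k)%N -> (k.+2 <= n)%N -> (1 <= p <= n)%N ->
  U k.+2 p = M c (U k) (U k.+1) p.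
Proof.
move=> h1 h2 hp; rewrite /U -mulE // Haut mul_consec //.
Qed.


Hypothesis n7 : (7 <= n)%N.

Lemma cC7 i k : (1 <= i <= 5)%N -> (1 <= k <= 7)%N -> c i i.+1 k = if k == i.+2 then 1 else 0.
Proof. move=> h1 h2; apply: cC; lia. Qed.
Lemma cA7 i j k : (1 <= i <= 7)%N -> (1 <= j <= 7)%N -> (1 <= k <= 7)%N -> c i j k = - c j i k.
Proof. move=> h1 h2 h3; apply: cA; lia. Qed.
Lemma cD7 i k : (1 <= i <= 7)%N -> (1 <= k <= 7)%N -> c i i k = 0.
Proof. move=> h1 h2; apply: (cD cA); lia. Qed.

Lemma tri j : (1 <= j)%N -> (j.+2 <= n)%N -> supp (U j.+2) j.+2.
Proof.
elim: j => // j IH _ hj s hs.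
case: s hs => [|s] hs; first exact: U0.
rewrite U_rec //; last lia.
case: j IH hj hs => [|j] IH hj hs.
  apply: (M_small cA); [exact: U0 | exact: U0 | lia | lia].
apply: (@M_supp _ c _ _ 0 j.+3) => //.
apply: IH => //; lia.
Qed.

Lemma autT i j p : (1 <= i <= n)%N -> (1 <= j <= n)%N -> (2 <= maxn i j)%N -> (1 <= p <= n)%N ->
  M c (U i) (U j) p =
  \sum_(q < p) (if (i < q.+1)%N && (j < q.+1)%N then c i j q.+1 else 0) * U q.+1 p.
Proof.
move=> hi hj hm hp; rewrite autE //.
rewrite (@trunc _ (fun q => (if (i < q.+1)%N && (j < q.+1)%N then c i j q.+1 else 0) * U q.+1 p) p n) //; first lia.
move=> q h1 h2; case: (ltnP q 2) => hq.
  case: ifP => h; last by rewrite mul0r.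
  lia.
have -> : U q.+1 p = 0.
  have -> : q.+1 = (q.-1).+2 by lia.
  apply: tri; lia.
by rewrite mulr0.
Qed.

Lemma lam_rec j : (3 <= j)%N -> (j.+2 <= n)%N -> U j.+2 j.+2 = U j j * U j.+1 j.+1.
Proof.
move=> h1 h2; rewrite U_rec //; last lia.
have hs : supp (U j.+1) j.+1.
  have -> : j.+1 = (j.-1).+2 by lia.
  apply: tri; lia.
rewrite (Lead1 cA) //.
rewrite big_ord_recr /= big1 ?add0r.
  rewrite cC ?eqxx ?mulr1 //; lia.
move=> s _; have hsj : supp (U j) j.
  have -> : j = (j.-2).+2 by lia.
  apply: tri; lia.
by rewrite hsj ?mul0r.
Qed.


Lemma lam3 : U 3 3 = U 1 1 * U 2 2 - U 1 2 * U 2 1.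
Proof.
rewrite (@U_rec 1 3) //; last lia.
rewrite /M !big_ord_recr !big_ord0 /= !U0.
rewrite (@cD7 1 3) // (@cD7 2 3) // (@cA7 2 1 3) // (@cC7 1 3) //=.
ring.
all: lia.
Qed.


Hypothesis c134 : c 1 3 4 = 0.
Hypothesis c145 : c 1 4 5 = 0.
Hypothesis c156 : c 1 5 6 = 0.
Hypothesis c245 : c 2 4 5 = 0.
Hypothesis c256 : c 2 5 6 = 0.
Hypothesis c146 : c 1 4 6 = 0.
Hypothesis c246 : c 2 4 6 = 0.
Hypothesis c136 : c 1 3 6 = 0.
Hypothesis c356 : c 3 5 6 = 1.
Hypothesis c135nz : c 1 3 5 != 0.
Hypothesis c467nz : c 4 6 7 != 0.
Hypothesis Hunit : A \in unitmx.

Lemma co_zero p : co (0 : 'rV[K]_n) p = 0.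
Proof. by apply: big1 => j _; rewrite mxE if_same. Qed.

Lemma t3 : supp (U 3) 3. Proof. apply: (@tri 1) => //; lia. Qed.
Lemma t4 : supp (U 4) 4. Proof. apply: (@tri 2) => //; lia. Qed.
Lemma t5 : supp (U 5) 5. Proof. apply: (@tri 3) => //; lia. Qed.
Lemma t6 : supp (U 6) 6. Proof. apply: (@tri 4) => //; lia. Qed.

Lemma lam4 : U 4 4 = U 2 2 * U 3 3.
Proof.
rewrite (@U_rec 2 4) //; try lia.
rewrite (Lead1 cA) //; try lia; last exact: t3.
rewrite !big_ord_recr big_ord0 /= !U0 c134 (@cC7 2 4) //=.
ring.
Qed.

Lemma Unn : U n n != 0.
Proof.
apply/negP => /eqP h.
have h0 : basis_vec K n n *m A = 0.
  apply: co_eq => p hp; rewrite co_zero; change (U n p = 0).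
  case: (ltngtP p n) => hpn; [ | lia | by rewrite hpn].
  have := @tri (n.-2) ltac:(lia) ltac:(lia) p; rewrite (_ : (n.-2).+2 = n); last lia.
  by move=> ->.
have := mulmxK Hunit (basis_vec K n n); rewrite h0 mul0mx => e.
have := @co_basis K n n n ltac:(lia); rewrite -e co_zero /E eqxx => /esym/eqP.
by rewrite oner_eq0.
Qed.

Lemma chain k : (4 <= k)%N -> (k <= n)%N -> U k k != 0 -> U 3 3 != 0 /\ U 4 4 != 0.
Proof.
elim: k => // k IH h1 h2 hnz.
case: (ltngtP k 3) => hk; first lia.
  move: hnz; rewrite (_ : k.+1 = (k.-1).+2); last lia.
  rewrite lam_rec; try lia.
  rewrite mulf_eq0 negb_or => /andP [_ hk']; apply: IH; try lia.
  by rewrite (_ : k = (k.-1).+1); last lia.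
move: hnz; rewrite hk lam4 mulf_eq0 negb_or => /andP [h3 h4]; split => //.
by rewrite h3 h4.
Qed.


Lemma L34 : U 3 3 != 0 /\ U 4 4 != 0.
Proof. apply: (@chain n) => //; [lia | exact: Unn]. Qed.
Lemma L5 : U 5 5 = U 3 3 * U 4 4. Proof. apply: (@lam_rec 3) => //; lia. Qed.
Lemma L6 : U 6 6 = U 4 4 * U 5 5. Proof. apply: (@lam_rec 4) => //; lia. Qed.
Lemma L7 : U 7 7 = U 5 5 * U 6 6. Proof. apply: (@lam_rec 5) => //; lia. Qed.
Lemma L3nz : U 3 3 != 0. Proof. by case: L34. Qed.
Lemma L4nz : U 4 4 != 0. Proof. by case: L34. Qed.
Lemma L5nz : U 5 5 != 0. Proof. by rewrite L5 mulf_neq0 // ?L3nz ?L4nz. Qed.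
Lemma L6nz : U 6 6 != 0. Proof. by rewrite L6 mulf_neq0 // ?L5nz ?L4nz. Qed.

Lemma ba : U 1 2 = 0.
Proof.
have := @autT 1 3 4 ltac:(lia) ltac:(lia) isT ltac:(lia).
rewrite (Lead1 cA) //; [|lia|exact: t3].
rewrite !big_ord_recr !big_ord0 /= !U0 c134 (@cC7 2 4) //=.
rewrite ?(mul0r, mulr0, add0r, addr0, mulr1) => /eqP.
by rewrite mulf_eq0 (negbTE L3nz) orbF => /eqP.
Qed.


Ltac simp0 := rewrite ?(mul0r, mulr0, add0r, addr0, mulr1, mul1r).

Lemma bb : U 1 3 = 0.
Proof.
have := @autT 1 4 5 ltac:(lia) ltac:(lia) isT ltac:(lia).
rewrite (Lead1 cA) //; [|lia|exact: t4].
rewrite !big_ord_recr !big_ord0 /= !U0 c145 c245 (@cC7 3 5) //= ba.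
simp0 => /eqP.
by rewrite mulf_eq0 (negbTE L4nz) orbF => /eqP.
Qed.

Lemma bc : U 1 4 = 0.
Proof.
have := @autT 1 5 6 ltac:(lia) ltac:(lia) isT ltac:(lia).
rewrite (Lead1 cA) //; [|lia|exact: t5].
rewrite !big_ord_recr !big_ord0 /= !U0 c156 (@cC7 4 6) //= ba bb.
simp0 => /eqP.
by rewrite mulf_eq0 (negbTE L5nz) orbF => /eqP.
Qed.

Lemma bd : U 2 3 = 0.
Proof.
have := @autT 2 4 5 ltac:(lia) ltac:(lia) isT ltac:(lia).
rewrite (Lead1 cA) //; [|lia|exact: t4].
rewrite !big_ord_recr !big_ord0 /= !U0 c145 c245 (@cC7 3 5) //=.
simp0 => /eqP.
by rewrite mulf_eq0 (negbTE L4nz) orbF => /eqP.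
Qed.

Lemma be : U 2 4 = 0.
Proof.
have := @autT 2 5 6 ltac:(lia) ltac:(lia) isT ltac:(lia).
rewrite (Lead1 cA) //; [|lia|exact: t5].
rewrite !big_ord_recr !big_ord0 /= !U0 c156 c256 (@cC7 4 6) //= bd.
simp0 => /eqP.
by rewrite mulf_eq0 (negbTE L5nz) orbF => /eqP.
Qed.

Lemma U34 : U 3 4 = 0.
Proof.
rewrite (@U_rec 1 4) //; try lia.
rewrite /M !big_ord_recr !big_ord0 /= !U0 ba bb bd (@cD7 1 4) // (@cC7 1 4) //=.
by simp0.
Qed.

Lemma bf : U 2 2 = 1.
Proof.
have := @autT 3 5 6 ltac:(lia) ltac:(lia) isT ltac:(lia).
rewrite (Lead1 cA) //; [|lia|exact: t5].
rewrite !big_ord_recr !big_ord0 /= !U0 (t3 (s:=1)) // (t3 (s:=2)) // U34 c356 L6 lam4.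
simp0 => e.
apply/esym; apply: (mulIf L5nz); apply: (mulIf L3nz).
transitivity (U 3 3 * U 5 5); first ring.
by rewrite e; ring.
Qed.

Lemma U41 : U 4 1 = 0. Proof. exact: t4. Qed.
Lemma U42 : U 4 2 = 0. Proof. exact: t4. Qed.
Lemma U43 : U 4 3 = 0. Proof. exact: t4. Qed.

Lemma bg : U 1 5 = 0.
Proof.
have := @autT 1 4 6 ltac:(lia) ltac:(lia) isT ltac:(lia).
rewrite /M !big_ord_recr !big_ord0 /= !U0 ba bb bc U41 U42 U43 c145 c146 c156.
rewrite (@cA7 5 4 6) // (@cC7 4 6) //= (@cD7 5 6) //.
simp0 => /eqP.
by rewrite mulrN1 oppr_eq0 mulf_eq0 (negbTE L4nz) orbF => /eqP.
Qed.


Lemma U31 : U 3 1 = 0. Proof. exact: t3. Qed.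
Lemma U32 : U 3 2 = 0. Proof. exact: t3. Qed.

Lemma U35 : U 3 5 = 0.
Proof.
rewrite (@U_rec 1 5) //; try lia.
rewrite /M !big_ord_recr !big_ord0 /= !U0 ba bb bc bd be (@cD7 1 5) // (@cC7 1 5) //=.
by simp0.
Qed.

Lemma U45 : U 4 5 = U 2 1 * U 3 3 * c 1 3 5.
Proof.
rewrite (@U_rec 2 5) //; try lia.
rewrite /M !big_ord_recr !big_ord0 /= !U0 U31 U32 U34 bd be (@cC7 2 5) //=.
by simp0.
Qed.

Lemma U56 : U 5 6 = U 3 3 * U 4 5.
Proof.
rewrite (@U_rec 3 6) //; try lia.
rewrite /M !big_ord_recr !big_ord0 /= !U0 U31 U32 U34 U35 U41 U42 U43 (@cC7 3 6) //= c356.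
by simp0.
Qed.

Lemma bh : U 2 1 = 0.
Proof.
have := @autT 1 3 6 ltac:(lia) ltac:(lia) isT ltac:(lia).
rewrite /M !big_ord_recr !big_ord0 /= !U0 ba bb bc bg U31 U32 U34 U35 c134 c136 c146 c156.
simp0 => /esym/eqP; rewrite U56 U45 !mulf_eq0 (negbTE L3nz) (negbTE c135nz) !orbF.
by move/eqP.
Qed.

Lemma bi : U 3 3 = 1.
Proof.
have := @autT 4 6 7 ltac:(lia) ltac:(lia) isT ltac:(lia).
rewrite (Lead1 cA) //; last exact: t6.
rewrite !big_ord_recr !big_ord0 /= !U0 U41 U42 U43 U45 bh L7 L5.
simp0 => e.
apply/esym; apply: (mulIf L6nz); apply: (mulIf L4nz); apply: (mulIf c467nz).
transitivity (U 4 4 * U 6 6 * c 4 6 7); first ring.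
by rewrite e; ring.
Qed.

Lemma bj : U 1 1 = 1.
Proof. by have := lam3; rewrite ba bi bf; simp0; rewrite subr0 => <-. Qed.


Definition G k := fun s => U k s - E K k s.

Lemma E_supp i : supp (E K i) i.
Proof. move=> s hs; rewrite /E; case: eqP => // e; move: hs; rewrite e ltnn. done. Qed.

Lemma supp_le (f : nat -> K) a b : supp f a -> (b <= a)%N -> supp f b.
Proof. move=> h hb s hs; apply: h; lia. Qed.

Lemma G_out k p : (1 <= k <= n)%N -> p = 0%N \/ (n < p)%N -> G k p = 0.
Proof.
move=> hk [->|hp]; rewrite /G /E.
  by rewrite U0; case: eqP => // e; [lia | rewrite subr0].
rewrite Ugt //; case: eqP => [e|_]; [lia | by rewrite subr0].
Qed.

Lemma G_rec j p : (1 <= j)%N -> (j.+2 <= n)%N -> (1 <= p <= n)%N ->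
  G j.+2 p = M c (E K j) (G j.+1) p + M c (G j) (E K j.+1) p + M c (G j) (G j.+1) p.
Proof.
move=> h1 h2 hp; rewrite /G U_rec //.
rewrite (@M_split _ c _ _ (E K j) (E K j.+1) (G j) (G j.+1)); last first.
- by move=> t; rewrite /G addrC subrK.
- by move=> t; rewrite /G addrC subrK.
rewrite (ME_consec cC) //; rewrite /G; ring.
Qed.

Lemma supp_G j a b q : (1 <= j)%N -> (j.+2 <= n)%N -> supp (G j) a -> supp (G j.+1) b ->
  (q <= (maxn j b).+1)%N -> (q <= (maxn a j.+1).+1)%N -> (q <= (maxn a b).+1)%N ->
  supp (G j.+2) q.
Proof.
move=> h1 h2 ha hb q1 q2 q3 p hp.
case: (posnP p) => [->|p0]; first by apply: G_out; [lia | left].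
case: (ltnP n p) => pn; first by apply: G_out; [lia | right].
rewrite G_rec //; last lia.
have e1 : M c (E K j) (G j.+1) p = 0.
  apply: (@M_supp _ c _ _ j b) => //; first exact: E_supp.
  lia.
have e2 : M c (G j) (E K j.+1) p = 0.
  apply: (@M_supp _ c _ _ a j.+1) => //; first exact: E_supp.
  lia.
have e3 : M c (G j) (G j.+1) p = 0.
  apply: (@M_supp _ c _ _ a b) => //; lia.
by rewrite e1 e2 e3 !addr0.
Qed.

Definition sf m k := if (k < 3)%N then m else if (k < 5)%N then m.+1 else m.+2.

Lemma sf_prop m k : (1 <= k)%N -> (sf m k.+2 <= (sf m k).+1)%N /\ (sf m k.+2 <= (sf m k.+1).+1)%N
  /\ (m <= sf m k)%N /\ (m <= sf m k.+1)%N.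
Proof.
rewrite /sf; case: k => [|[|[|[|[|k]]]]] //= _; lia.
Qed.

Lemma claimC m : supp (G 1) m -> supp (G 2) m -> forall k, (1 <= k)%N -> (k.+1 <= n)%N ->
  supp (G k) (sf m k) /\ supp (G k.+1) (sf m k.+1).
Proof.
move=> g1 g2; elim => // k IH hk hkn.
case: (posnP k) => [e|k0].
  by rewrite e /sf /=.
have [IH1 IH2] := IH k0 ltac:(lia).
split => //.
have := sf_prop m k0 => -[s1 [s2 [s3 s4]]].
apply: (@supp_G k (sf m k) (sf m k.+1)) => //; lia.
Qed.

Lemma Cm m : supp (G 1) m -> supp (G 2) m -> forall k, (3 <= k <= n)%N ->
  supp (G k) m.+1 /\ ((5 <= k)%N -> supp (G k) m.+2).
Proof.
move=> g1 g2 k hk.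
have [_ h] := @claimC m g1 g2 k.-1 ltac:(lia) ltac:(lia).
rewrite (_ : k.-1.+1 = k) in h; last lia.
split; first by apply: supp_le h _; rewrite /sf; case: (ltnP k 3) => ?; [lia|]; case: (ltnP k 5) => ?; lia.
by move=> h5; apply: supp_le h _; rewrite /sf; case: (ltnP k 3) => ?; [lia|]; case: (ltnP k 5) => ?; lia.
Qed.


Lemma UG k p : U k p = E K k p + G k p.
Proof. by rewrite /G addrC subrK. Qed.

Lemma M_GE (g : nat -> K) r : supp g r.+1 -> (4 <= r)%N -> (r.+2 <= n)%N ->
  M c g (E K r) r.+2 = - g r.+1.
Proof.
move=> hg h4 hn.
have inner s : \sum_(t < r.+2) g s * E K r t * c s t r.+2 = g s * c s r r.+2.
  transitivity (\sum_(t < r.+2) (if (t : nat) == r then g s * c s r r.+2 else 0)).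
    apply: eq_bigr => t _; rewrite /E; case: eqP => [->|]; first by rewrite mulr1.
    by rewrite mulr0 mul0r.
  move: (sum_delta r.+2 r (fun _ => g s * c s r r.+2)) => /= ->.
  by rewrite (_ : (r < r.+2)%N = true) //; lia.
rewrite /M; under eq_bigr do rewrite inner.
rewrite big_ord_recr /= big1 ?add0r; last by move=> s _; rewrite hg ?mul0r.
rewrite cA; try lia.
rewrite cC; try lia.
by rewrite eqxx mulrN1.
Qed.

Lemma mstep1 i r : (1 <= i <= 2)%N -> (4 <= r)%N -> (r.+2 <= n)%N ->
  supp (G 1) r.+1 -> supp (G 2) r.+1 -> G i r.+1 = 0.
Proof.
move=> hi h4 hn g1 g2.
have gi : supp (G i) r.+1 by case/andP: hi; case: i => [|[|[|i]]] //.
have C := Cm g1 g2.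
have e := @autT i r r.+2 ltac:(lia) ltac:(lia) ltac:(lia) ltac:(lia).
rewrite (@M_split _ c _ _ (E K i) (E K r) (G i) (G r)) in e; try (by move=> t; exact: UG).
rewrite M_EE (_ : (i < r.+2)%N && (r < r.+2)%N = true) in e; last by apply/andP; lia.
have [Cr _] := C r ltac:(lia).
have [_ Cr1] := C r.+1 ltac:(lia).
have [_ Cr2] := C r.+2 ltac:(lia).
rewrite (@M_supp _ c (E K i) (G r) i r.+2) ?E_supp // in e; last lia.
rewrite (@M_supp _ c (G i) (G r) r.+1 r.+2) // in e; last lia.
rewrite M_GE // in e.
rewrite !big_ord_recr /= big1 ?add0r in e; last first.
  move=> q _; case: ifP => h; last by rewrite mul0r.
  have := ltn_ord q; lia.
rewrite (_ : (i < r.+1)%N && (r < r.+1)%N = true) in e; last by apply/andP; lia.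
rewrite (_ : (i < r.+2)%N && (r < r.+2)%N = true) in e; last by apply/andP; lia.
rewrite !UG (Cr1 ltac:(lia) r.+2) // (Cr2 ltac:(lia) r.+2) // /E eqxx in e.
rewrite (_ : (r.+2 == r.+1) = false) in e; last lia.
move: e; rewrite !addr0 ?add0r mulr0 mulr1 => e.
have -> : G i r.+1 = c i r r.+2 - (c i r r.+2 - G i r.+1) by ring.
by rewrite e add0r subrr.
exact: E_supp.
Qed.


Lemma G1base : supp (G 1) 5.
Proof.
move=> s hs; case: s hs => [|[|[|[|[|s]]]]] // _; rewrite /G /E /= ?U0 ?bj ?ba ?bb ?bc;
  by rewrite ?subrr ?subr0.
Qed.

Lemma G2base : supp (G 2) 5.
Proof.
move=> s hs; case: s hs => [|[|[|[|[|s]]]]] // _; rewrite /G /E /= ?U0 ?bh ?bf ?bd ?be;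
  by rewrite ?subrr ?subr0.
Qed.

Lemma allm m : (5 <= m)%N -> (m <= n)%N -> supp (G 1) m /\ supp (G 2) m.
Proof.
elim: m => // m IH h1 h2.
case: (ltngtP m 4) => hm; first lia; last by rewrite hm; split; [exact: G1base | exact: G2base].
have [g1 g2] := IH ltac:(lia) ltac:(lia).
have e1 := @mstep1 1 m.-1 isT ltac:(lia) ltac:(lia).
have e2 := @mstep1 2 m.-1 isT ltac:(lia) ltac:(lia).
rewrite (_ : m.-1.+1 = m) in e1 e2; last lia.
have [z1 z2] : G 1 m = 0 /\ G 2 m = 0 by split; [apply: e1 | apply: e2].
split => s hs; case: (ltngtP s m) => hsm; try lia.
- exact: g1.
- by rewrite hsm.
- exact: g2.
- by rewrite hsm.
Qed.

Lemma fin : A = special_aut n (U 1 n) (U 2 n).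
Proof.
have [g1 g2] := @allm n ltac:(lia) (leqnn n).
have C := Cm g1 g2.
apply/matrixP => i j.
have -> : A i j = U i.+1 j.+1 by rewrite /U U_row co_ord mxE.
rewrite mxE UG.
have hj := ltn_ord j.
case: (ltnP 1 i) => hi.
  have [Ci _] := C i.+1 ltac:(have := ltn_ord i; lia).
  rewrite Ci; last lia.
  rewrite /E eqSS eq_sym addr0.
  rewrite (_ : (nat_of_ord i == 0%N) = false); last lia.
  rewrite (_ : (nat_of_ord i == 1%N) = false); last lia.
  by rewrite !if_same addr0.
have [i0|i1] : nat_of_ord i = 0%N \/ nat_of_ord i = 1%N by lia.
- rewrite i0 /=.
  case: (ltngtP j.+1 n) => hjn; [ | lia | ].
    rewrite g1 // addr0 /E eqSS addr0 eq_sym; by case: (_ == _).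
  + rewrite -UG hjn (_ : (0 == nat_of_ord j) = false) ?add0r //; lia.
- rewrite i1 /=.
  case: (ltngtP j.+1 n) => hjn; [ | lia | ].
  + rewrite g2 // addr0 /E eqSS addr0 eq_sym; by case: (_ == _).
  + rewrite -UG hjn (_ : (1 == nat_of_ord j) = false) ?add0r //; lia.
Qed.

End Aut.

Section Spec.
Variable K : numFieldType.
Variable n : nat.
Hypothesis n7 : (7 <= n)%N.

Lemma co_S (z : 'rV[K]_n) a b p : (1 <= p <= n)%N ->
  co (z *m special_aut n a b) p = co z p + (if p == n then a * co z 1 + b * co z 2 else 0).
Proof.
case: p => [|r] //= hr; have hr' : (r < n)%N by lia.
rewrite !(co_ord _ (Ordinal hr')) mxE.
under eq_bigr => i _ do rewrite mxE /= mulrDr -(co_ord z i).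
rewrite big_split /=; congr (_ + _).
  transitivity (\sum_(i < n) (if (i : nat) == r then co z r.+1 else 0)).
    apply: eq_bigr => i _; case: eqP => [->|]; [by rewrite mulr1 | by rewrite mulr0].
  by move: (sum_delta n r (fun _ => co z r.+1)) => /= ->; rewrite hr' (co_ord z (Ordinal hr')).
case: (r.+1 == n); last by apply: big1 => i _; rewrite mulr0.
transitivity (\sum_(i < n) ((if (i : nat) == 0%N then a * co z 1 else 0) +
                            (if (i : nat) == 1%N then b * co z 2 else 0))).
  apply: eq_bigr => i _; case: eqP => [->|_]; first by rewrite mulrC addr0.
  case: eqP => [->|_]; first by rewrite mulrC add0r.
  by rewrite mulr0 addr0.
rewrite big_split /=.
move: (sum_delta n 0 (fun _ => a * co z 1)) => /= ->.
move: (sum_delta n 1 (fun _ => b * co z 2)) => /= ->.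
rewrite (_ : (0 < n)%N = true); last lia.
by rewrite (_ : (1 < n)%N = true); last lia.
Qed.

Lemma special_unit (a b : K) : special_aut n a b \in unitmx.
Proof.
have h : special_aut n a b *m special_aut n (-a) (-b) = 1%:M.
  apply/row_matrixP => i; rewrite row_mul rowE [row i 1%:M]rowE mulmx1 -mulmxA.
  apply: co_eq => p hp.
  rewrite mulmxA !co_S; try lia.
  rewrite (_ : (1 == n) = false); last lia.
  rewrite (_ : (2 == n) = false); last lia.
  case: (p == n); last by rewrite !addr0.
  by rewrite !addr0; ring.
by case: (mulmx1_unit h).
Qed.

Variable c : nat -> nat -> nat -> K.
Hypothesis cA : forall i j k, (1 <= i <= n)%N -> (1 <= j <= n)%N -> (1 <= k <= n)%N ->
         c i j k = - c j i k.
Hypothesis cM : forall i j k, (1 <= i <= n)%N -> (1 <= j <= n)%N -> (1 <= k <= n)%N ->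
         (k <= maxn i j)%N -> c i j k = 0.

Lemma special_aut_ok (a b : K) : is_automorphism c (special_aut n a b).
Proof.
split; first exact: special_unit.
move=> x y; apply: co_eq => p hp.
have z1 : co (alg_mul c x y) 1 = 0.
  rewrite (mulE cM); last lia.
  apply: (M_small cA); rewrite ?co0 //; lia.
have z2 : co (alg_mul c x y) 2 = 0.
  rewrite (mulE cM); last lia.
  apply: (M_small cA); rewrite ?co0 //; lia.
rewrite co_S // z1 z2 !mulr0 addr0 if_same addr0 !(mulE cM) //.
apply: M_ext => s hs.
  case: (posnP s) => [->|s0]; first by rewrite !co0.
  rewrite co_S; last lia.
  by rewrite (_ : (s == n) = false) ?addr0 //; lia.
case: (posnP s) => [->|s0]; first by rewrite !co0.
rewrite co_S; last lia.
by rewrite (_ : (s == n) = false) ?addr0 //; lia.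
Qed.

End Spec.

Theorem mainTheorem18 (R : realType) (n : nat) (c : nat -> nat -> nat -> R[i]) :
  (7 <= n)%N -> in_That n c ->
  forall A : 'M[R[i]]_n,
    is_automorphism c A <-> exists a b : R[i], A = special_aut n a b.
Proof.
move=> n7 [[cA cM cC] [c134 [c145 [c156 [c245 [c256 [c146 [c246 c136]]]]]]] c356 cnz] A.
have [c135nz c467nz] : c 1 3 5 != 0 /\ c 4 6 7 != 0.
  by move: cnz; rewrite mulf_eq0 negb_or => /andP.
split.
- move=> [Hunit Haut].
  exists (U A 1 n), (U A 2 n).
  apply: fin; eassumption.
- move=> [a [b ->]].
  exact: special_aut_ok.
Qed.
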